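(* Let $\psi$ be an $n$-dimensional unique sink orientation and let $C$ be a directed cycle in $\psi$ whose edges span every coordinate $1,\dots,n$. Then every vertex $v$ of $C$ has $r_\psi(v) = [n]$.
   Context: Let $Q^n = 2^{[n]}$ be the vertex set of the $n$-cube, with $u,v$ adjacent iff $|u\oplus v|=1$; the edge $\{v, v\oplus\{j\}\}$ is said to be in coordinate $j$. A unique sink orientation (USO) is an orientation of the cube's edges such that every nonempty face $F_{J,v}=\{u : v\oplus u\subseteq J\}$ has a unique sink. The outmap $s_\psi(v)$ is the set of coordinates $j$ such that the edge $\{v,v\oplus\{j\}\}$ is directed away from $v$. The reachmap is $r_\psi(v)=s_\psi(v)\cup\{j : \exists u \text{ reachable from } v \text{ by a directed path with } j\in s_\psi(u)\}$. A cycle spans coordinate $j$ if it contains an edge in coordinate $j$. *)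

(* Defs.v *)
From mathcomp Require Import all_boot.
Set Implicit Arguments. Unset Strict Implicit. Unset Printing Implicit Defensive.

(* Vertices of the n-cube Q^n are subsets of [n] = 'I_n. *)
Definition vtx (n : nat) := {set 'I_n}.

Definition symdiff (n : nat) (u v : {set 'I_n}) : {set 'I_n} :=
  (u :\: v) :|: (v :\: u).

Definition flip (n : nat) (v : {set 'I_n}) (j : 'I_n) : {set 'I_n} :=
  symdiff v [set j].

(* An orientation of the cube's edges: [out v j] says the edge
   {v, v (+) {j}} is directed away from v.  Consistency: each edge gets
   exactly one direction. *)
Definition orientation (n : nat) (out : {set 'I_n} -> 'I_n -> bool) : Prop :=
  forall v j, out (flip v j) j = ~~ out v j.

Definition face (n : nat) (J v : {set 'I_n}) : {set {set 'I_n}} :=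
  [set u | symdiff v u \subset J].

Definition is_face_sink (n : nat) (out : {set 'I_n} -> 'I_n -> bool)
    (J v u : {set 'I_n}) : bool :=
  (u \in face J v) && [forall j in J, ~~ out u j].

Definition USO (n : nat) (out : {set 'I_n} -> 'I_n -> bool) : Prop :=
  orientation out /\
  forall J v : {set 'I_n}, #|[set u | is_face_sink out J v u]| = 1.

Definition outmap (n : nat) (out : {set 'I_n} -> 'I_n -> bool)
    (v : {set 'I_n}) : {set 'I_n} := [set j | out v j].

Definition darc (n : nat) (out : {set 'I_n} -> 'I_n -> bool) : rel {set 'I_n} :=
  fun u w => [exists j, (w == flip u j) && out u j].

Definition reachmap (n : nat) (out : {set 'I_n} -> 'I_n -> bool)
    (v : {set 'I_n}) : {set 'I_n} :=
  outmap out v :|: [set j | [exists u, connect (darc out) v u && (j \in outmap out u)]].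

(* A directed cycle, given as a duplicate-free nonempty sequence of
   vertices c = [:: c0; ...; ck] with arcs c0->c1->...->ck->c0. *)
Definition directed_cycle (n : nat) (out : {set 'I_n} -> 'I_n -> bool)
    (c : seq {set 'I_n}) : Prop :=
  [/\ c != [::], uniq c & cycle (darc out) c].

Definition cycle_spans (n : nat) (c : seq {set 'I_n}) (j : 'I_n) : bool :=
  has (fun x => next c x == flip x j) c.

(* Main.v *)
Require Import Defs.
From mathcomp Require Import all_boot.

Lemma flip_inj (n : nat) (x : {set 'I_n}) (j j' : 'I_n) :
  flip x j = flip x j' -> j = j'.
Proof.
move=> H.
have : (j \in flip x j) = (j \in flip x j') by rewrite H.
rewrite /flip /symdiff !inE eqxx.
case: (j \in x) => /=; case: eqP => //= ->.
Qed.

Theorem lemma11 (n : nat) (out : {set 'I_n} -> 'I_n -> bool)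
    (c : seq {set 'I_n}) :
  USO out ->
  directed_cycle out c ->
  (forall j : 'I_n, cycle_spans c j) ->
  forall v, v \in c -> reachmap out v = [set: 'I_n].
Proof.
move=> _ [_ _ Hcyc] Hspan v vc.
apply/setP => j; rewrite inE.
have [x xc /eqP Hx] := hasP (Hspan j).
have Hd := next_cycle Hcyc xc.
have Hout : out x j.
  move: Hd; rewrite /darc => /existsP [j' /andP [/eqP H1 H2]].
  by rewrite Hx in H1; rewrite (@flip_inj _ _ _ _ H1).
have Hconn : connect (darc out) v x.
  case: (rot_to vc) => i p Hrot.
  have Hc' : cycle (darc out) (v :: p) by rewrite -Hrot rot_cycle.
  move: Hc'; rewrite /cycle => Hc'; apply: (path_connect Hc').
  have : x \in v :: p by rewrite -Hrot mem_rot.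
  by move=> H; rewrite in_cons mem_rcons H orbT.
rewrite in_setT; apply/orP; right; rewrite inE.
apply/existsP; exists x; rewrite Hconn /= /outmap inE //.
Qed.
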